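(* Let $(H,A,C)$ be a Doi-Hopf datum ($H$ a bialgebra). Then the $k$-modules $V_1,V_2,V_3,V_4,V_5$ defined below are isomorphic, via $k$-linear bijections that send normalized elements to normalized elements. Explicitly: $\nu\in V_1$ corresponds to $\lambda(c\otimes d)=\nu(c\otimes d\otimes 1_A)$ in $V_2$ (inverse $\nu(c\otimes d\otimes a)=a\cdot\lambda(c\otimes d)$); $\lambda\in V_2$ corresponds to $\theta=(\varepsilon_C\otimes I_A)\circ\lambda$ in $V_3$ (inverse $\lambda(c\otimes d)=\sum c_{(1)}\otimes\theta(c_{(2)}\otimes d)$); $\theta\in V_3$ corresponds to $\gamma(c)(d)=\theta(c\otimes d)$ in $V_4$; and $\gamma\in V_4$ corresponds to $\psi(c\otimes a)=a\cdot\gamma(c)$ in $V_5$ (inverse $\gamma(c)=\psi(c\otimes 1_A)$).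
   Context: $k$ commutative ring; Sweedler notation $\Delta(c)=\sum c_{(1)}\otimes c_{(2)}$, $\rho(m)=\sum m_{<-1>}\otimes m_{<0>}$ (iterated $m_{<-2>}\otimes m_{<-1>}\otimes m_{<0>}$). Doi-Hopf datum $(H,A,C)$: $H$ bialgebra, $A$ left $H$-comodule algebra, $C$ right $H$-module coalgebra, $C$ flat. $C\otimes A$ is an $A$-bimodule and left $C$-comodule via $a\cdot(c\otimes b)=c\otimes ab$, $(c\otimes b)\cdot a=\sum c\cdot a_{<-1>}\otimes ba_{<0>}$, $\rho(c\otimes b)=\sum c_{(1)}\otimes c_{(2)}\otimes b$; $C\otimes C\otimes A$ is a right $A$-module and left $C$-comodule via $(c\otimes d\otimes b)a=\sum c\cdot a_{<-2>}\otimes d\cdot a_{<-1>}\otimes ba_{<0>}$ and coaction on the first factor. $\mathrm{Hom}(C,A)$ is an $A$-bimodule via $(a\cdot f)(c)=\sum a_{<0>}f(c\cdot a_{<-1>})$, $(f\cdot a)(c)=f(c)a$. For $x=\sum_i c_i\otimes a_i\in C\otimes A$ or $x\in A$ we write the auxiliary expression $D(d,\theta):=\sum d\cdot\theta_{<-1>}\otimes\theta_{<0>}$ for $d\in C,\theta\in A$. $V_1$: maps $\nu:C\otimes C\otimes A\to C\otimes A$ that are right $A$-linear and left $C$-colinear, with $\nu(c\otimes d\otimes ba)=b\cdot\nu(c\otimes d\otimes a)$ and $\sum D(d_{(2)},(\varepsilon\otimes I)\nu(c\otimes d_{(1)}\otimes 1))=\nu(c\otimes d\otimes 1)$; normalized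 if $\sum\nu(c_{(1)}\otimes c_{(2)}\otimes a)=c\otimes a$. $V_2$: maps $\lambda:C\otimes C\to C\otimes A$ with $\sum D(d_{(2)},(\varepsilon\otimes I)\lambda(c\otimes d_{(1)}))=\lambda(c\otimes d)$, $\sum a_{<0>}\cdot\lambda(c\cdot a_{<-2>}\otimes d\cdot a_{<-1>})=\lambda(c\otimes d)\cdot a$, $\sum c_{(1)}\otimes\lambda(c_{(2)}\otimes d)=\rho(\lambda(c\otimes d))$; normalized if $\sum\lambda(c_{(1)}\otimes c_{(2)})=c\otimes 1_A$. $V_3$: maps $\theta:C\otimes C\to A$ with $\theta(c\otimes d)a=\sum a_{<0>}\theta(c\cdot a_{<-2>}\otimes d\cdot a_{<-1>})$ and $\sum c_{(1)}\otimes\theta(c_{(2)}\otimes d)=\sum D(d_{(2)},\theta(c\otimes d_{(1)}))$; normalized if $\sum\theta(c_{(1)}\otimes c_{(2)})=\varepsilon(c)1_A$. $V_4$: maps $\gamma:C\to\mathrm{Hom}(C,A)$ with $\sum a_{<0>}\gamma(c\cdot a_{<-2>})(d\cdot a_{<-1>})=\gamma(c)(d)\,a$ and $\sum c_{(1)}\otimes\gamma(c_{(2)})(d)=\sum D(d_{(2)},\gamma(c)(d_{(1)}))$; normalized if $\sum\gamma(c_{(1)})(c_{(2)})=\varepsilon(c)1_A$. $V_5$: $A$-bimodule maps $\psi:C\otimes A\to\mathrm{Hom}(C,A)$ with $\sum c_{(1)}\otimes\psi(c_{(2)}\otimes 1_A)(d)=\sum D(d_{(2)},\psi(c\otimes 1_A)(d_{(1)}))$;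 normalized if $\sum\psi(c_{(1)}\otimes 1_A)(c_{(2)})=\varepsilon(c)1_A$. All identities are required for all $a,b\in A$, $c,d\in C$. *)

(* Defs.v *)
(* Tensor products over the commutative ring k are given by
   their universal property. *)
From HB Require Import structures.
From mathcomp Require Import all_boot all_order all_algebra.
From Stdlib Require Import ClassicalEpsilon.
Set Implicit Arguments. Unset Strict Implicit. Unset Printing Implicit Defensive.
Import GRing.Theory.
Local Open Scope ring_scope.

Definition lin (k : comPzRingType) (M N : lmodType k) (f : M -> N) :=
  forall (a : k) (x y : M), f (a *: x + y) = a *: f x + f y.

Definition linK (k : comPzRingType) (M : lmodType k) (f : M -> k) :=
  forall (a : k) (x y : M), f (a *: x + y) = a * f x + f y.

Definition bilin (k : comPzRingType) (M N P : lmodType k) (f : M -> N -> P) :=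
  (forall m : M, lin (f m)) /\ (forall n : N, lin (fun m => f m n)).

Record tensor (k : comPzRingType) (M N : lmodType k) := Tensor {
  tT : lmodType k;
  tmul : M -> N -> tT;
  tmul_bilin : bilin tmul;
  tuniv : forall (P : lmodType k) (f : M -> N -> P), bilin f ->
    exists! g : tT -> P, lin g /\ forall m n, g (tmul m n) = f m n }.
Arguments tmul {k M N} t _ _.
Arguments tT {k M N} t.

Definition tlift (k : comPzRingType) (M N : lmodType k) (T : tensor M N)
    (P : lmodType k) (f : M -> N -> P) : tT T -> P :=
  epsilon (inhabits (fun _ => 0))
    (fun g : tT T -> P => lin g /\ forall m n, g (tmul T m n) = f m n).
Arguments tlift {k M N} T {P} f _.

Record doi_hopf (k : comPzRingType) := DoiHopf {
  H : algType k;  A : algType k;  C : lmodType k;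
  HH : tensor H H;  HHH : tensor H (tT HH);
  HA : tensor H A;  HHA : tensor H (tT HA);
  CC : tensor C C;  CCC : tensor C (tT CC);
  CA : tensor C A;  CCA : tensor C (tT CA);  CCCA : tensor C (tT CCA);
  DeltaH : H -> tT HH;  epsH : H -> k;
  rhoA : A -> tT HA;
  DeltaC : C -> tT CC;  epsC : C -> k;
  actC : C -> H -> C;
  DeltaH_lin : lin DeltaH;  epsH_lin : linK epsH;
  DeltaH_coass : forall h,
    tlift HH (fun h1 h2 => tmul HHH h1 (DeltaH h2)) (DeltaH h) =
    tlift HH (fun h1 h2 => tlift HH (fun x y => tmul HHH x (tmul HH y h2))
                                  (DeltaH h1)) (DeltaH h);
  epsH_counitl : forall h, tlift HH (fun h1 h2 => epsH h1 *: h2) (DeltaH h) = h;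
  epsH_counitr : forall h, tlift HH (fun h1 h2 => epsH h2 *: h1) (DeltaH h) = h;
  DeltaH_mul : forall h g, DeltaH (h * g) =
    tlift HH (fun h1 h2 => tlift HH (fun g1 g2 => tmul HH (h1 * g1) (h2 * g2))
                                  (DeltaH g)) (DeltaH h);
  DeltaH_one : DeltaH 1 = tmul HH 1 1;
  epsH_mul : forall h g, epsH (h * g) = epsH h * epsH g;
  epsH_one : epsH 1 = 1;
  rhoA_lin : lin rhoA;
  rhoA_coass : forall a,
    tlift HA (fun h b => tmul HHA h (rhoA b)) (rhoA a) =
    tlift HA (fun h b => tlift HH (fun h1 h2 => tmul HHA h1 (tmul HA h2 b))
                                 (DeltaH h)) (rhoA a);
  rhoA_counit : forall a, tlift HA (fun h b => epsH h *: b) (rhoA a) = a;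
  rhoA_mul : forall a b, rhoA (a * b) =
    tlift HA (fun h1 a1 => tlift HA (fun h2 b2 => tmul HA (h1 * h2) (a1 * b2))
                                   (rhoA b)) (rhoA a);
  rhoA_one : rhoA 1 = tmul HA 1 1;
  DeltaC_lin : lin DeltaC;  epsC_lin : linK epsC;
  DeltaC_coass : forall c,
    tlift CC (fun c1 c2 => tmul CCC c1 (DeltaC c2)) (DeltaC c) =
    tlift CC (fun c1 c2 => tlift CC (fun x y => tmul CCC x (tmul CC y c2))
                                  (DeltaC c1)) (DeltaC c);
  epsC_counitl : forall c, tlift CC (fun c1 c2 => epsC c1 *: c2) (DeltaC c) = c;
  epsC_counitr : forall c, tlift CC (fun c1 c2 => epsC c2 *: c1) (DeltaC c) = c;
  actC_bilin : bilin actC;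
  actC_mul : forall c h g, actC c (h * g) = actC (actC c h) g;
  actC_one : forall c, actC c 1 = c;
  DeltaC_act : forall c h, DeltaC (actC c h) =
    tlift CC (fun c1 c2 => tlift HH (fun h1 h2 => tmul CC (actC c1 h1) (actC c2 h2))
                                  (DeltaH h)) (DeltaC c);
  epsC_act : forall c h, epsC (actC c h) = epsC c * epsH h;
  C_flat : forall (M N : lmodType k) (TM : tensor C M) (TN : tensor C N) (f : M -> N),
    lin f -> injective f -> injective (tlift TM (fun c m => tmul TN c (f m)))
}.

Section DoiHopfSpaces.
Context (k : comPzRingType) (D : doi_hopf k).
Local Notation H := (H D). Local Notation A := (A D). Local Notation C := (C D).
Local Notation HA := (HA D). Local Notation CC := (CC D). Local Notation CA := (CA D).
Local Notation CCA := (CCA D). Local Notation CCCA := (CCCA D).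
Local Notation rho := (@rhoA k D). Local Notation Dl := (@DeltaC k D).
Local Notation eC := (@epsC k D). Local Notation act := (@actC k D).

Definition Dexp (d : C) (th : A) : tT CA :=
  tlift HA (fun h a0 => tmul CA (act d h) a0) (rho th).

Definition epsI (x : tT CA) : A := tlift CA (fun c a => eC c *: a) x.

Definition lactCA (a : A) (x : tT CA) : tT CA :=
  tlift CA (fun c b => tmul CA c (a * b)) x.
Definition ractCA (x : tT CA) (a : A) : tT CA :=
  tlift CA (fun c b => tlift HA (fun h a0 => tmul CA (act c h) (b * a0)) (rho a)) x.
Definition rhoCA (x : tT CA) : tT CCA :=
  tlift CA (fun c b => tlift CC (fun c1 c2 => tmul CCA c1 (tmul CA c2 b)) (Dl c)) x.

Definition ractCCA (y : tT CCA) (a : A) : tT CCA :=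
  tlift CCA (fun c x => tlift CA (fun d b =>
     tlift HA (fun h a' => tlift HA (fun h' a0 =>
         tmul CCA (act c h) (tmul CA (act d h') (b * a0))) (rho a')) (rho a)) x) y.
Definition rhoCCA (y : tT CCA) : tT CCCA :=
  tlift CCA (fun c x => tlift CC (fun c1 c2 => tmul CCCA c1 (tmul CCA c2 x)) (Dl c)) y.

Definition lactHom (a : A) (f : C -> A) : C -> A :=
  fun c => tlift HA (fun h a0 => a0 * f (act c h)) (rho a).
Definition ractHom (f : C -> A) (a : A) : C -> A := fun c => f c * a.

Definition twistCA (a : A) (F : H -> H -> tT CA) : tT CA :=
  tlift HA (fun h a' => tlift HA (fun h' a0 => lactCA a0 (F h h')) (rho a')) (rho a).
Definition twistA (a : A) (F : H -> H -> A) : A :=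
  tlift HA (fun h a' => tlift HA (fun h' a0 => a0 * F h h') (rho a')) (rho a).

Definition V1 (nu : tT CCA -> tT CA) : Prop :=
  [/\ lin nu,
      forall y a, nu (ractCCA y a) = ractCA (nu y) a,
      forall y, rhoCA (nu y) = tlift CCCA (fun c z => tmul CCA c (nu z)) (rhoCCA y),
      forall c d a b, nu (tmul CCA c (tmul CA d (b * a))) =
                      lactCA b (nu (tmul CCA c (tmul CA d a)))
    & forall c d, tlift CC (fun d1 d2 => Dexp d2 (epsI (nu (tmul CCA c (tmul CA d1 1)))))
                           (Dl d) = nu (tmul CCA c (tmul CA d 1))].
Definition N1 (nu : tT CCA -> tT CA) : Prop :=
  forall c a, tlift CC (fun c1 c2 => nu (tmul CCA c1 (tmul CA c2 a))) (Dl c) = tmul CA c a.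

Definition V2 (la : tT CC -> tT CA) : Prop :=
  [/\ lin la,
      forall c d, tlift CC (fun d1 d2 => Dexp d2 (epsI (la (tmul CC c d1)))) (Dl d)
                  = la (tmul CC c d),
      forall c d a, twistCA a (fun h h' => la (tmul CC (act c h) (act d h')))
                    = ractCA (la (tmul CC c d)) a
    & forall c d, tlift CC (fun c1 c2 => tmul CCA c1 (la (tmul CC c2 d))) (Dl c)
                  = rhoCA (la (tmul CC c d))].
Definition N2 (la : tT CC -> tT CA) : Prop :=
  forall c, tlift CC (fun c1 c2 => la (tmul CC c1 c2)) (Dl c) = tmul CA c 1.

Definition V3 (th : tT CC -> A) : Prop :=
  [/\ lin th,
      forall c d a, th (tmul CC c d) * a
                    = twistA a (fun h h' => th (tmul CC (act c h) (act d h')))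
    & forall c d, tlift CC (fun c1 c2 => tmul CA c1 (th (tmul CC c2 d))) (Dl c)
                  = tlift CC (fun d1 d2 => Dexp d2 (th (tmul CC c d1))) (Dl d)].
Definition N3 (th : tT CC -> A) : Prop :=
  forall c, tlift CC (fun c1 c2 => th (tmul CC c1 c2)) (Dl c) = eC c *: 1.

Definition V4 (ga : C -> C -> A) : Prop :=
  [/\ forall c, lin (ga c),
      forall a c c' d, ga (a *: c + c') d = a *: ga c d + ga c' d,
      forall c d a, twistA a (fun h h' => ga (act c h) (act d h')) = ga c d * a
    & forall c d, tlift CC (fun c1 c2 => tmul CA c1 (ga c2 d)) (Dl c)
                  = tlift CC (fun d1 d2 => Dexp d2 (ga c d1)) (Dl d)].
Definition N4 (ga : C -> C -> A) : Prop :=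
  forall c, tlift CC (fun c1 c2 => ga c1 c2) (Dl c) = eC c *: 1.

Definition V5 (ps : tT CA -> C -> A) : Prop :=
  [/\ forall x, lin (ps x),
      forall a x x' d, ps (a *: x + x') d = a *: ps x d + ps x' d,
      forall a x, ps (lactCA a x) = lactHom a (ps x),
      forall x a, ps (ractCA x a) = ractHom (ps x) a
    & forall c d, tlift CC (fun c1 c2 => tmul CA c1 (ps (tmul CA c2 1) d)) (Dl c)
                  = tlift CC (fun d1 d2 => Dexp d2 (ps (tmul CA c 1) d1)) (Dl d)].
Definition N5 (ps : tT CA -> C -> A) : Prop :=
  forall c, tlift CC (fun c1 c2 => ps (tmul CA c1 1) c2) (Dl c) = eC c *: 1.

Definition F12 (nu : tT CCA -> tT CA) : tT CC -> tT CA :=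
  tlift CC (fun c d => nu (tmul CCA c (tmul CA d 1))).
Definition G21 (la : tT CC -> tT CA) : tT CCA -> tT CA :=
  tlift CCA (fun c x => tlift CA (fun d a => lactCA a (la (tmul CC c d))) x).
Definition F23 (la : tT CC -> tT CA) : tT CC -> A := fun x => epsI (la x).
Definition G32 (th : tT CC -> A) : tT CC -> tT CA :=
  tlift CC (fun c d => tlift CC (fun c1 c2 => tmul CA c1 (th (tmul CC c2 d))) (Dl c)).
Definition F34 (th : tT CC -> A) : C -> C -> A := fun c d => th (tmul CC c d).
Definition G43 (ga : C -> C -> A) : tT CC -> A := tlift CC ga.
Definition F45 (ga : C -> C -> A) : tT CA -> C -> A :=
  fun x d => tlift CA (fun c a => lactHom a (ga c) d) x.
Definition G54 (ps : tT CA -> C -> A) : C -> C -> A := fun c => ps (tmul CA c 1).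

End DoiHopfSpaces.

Definition norm_bij (X Y : Type) (V N : X -> Prop) (W M : Y -> Prop)
    (F : X -> Y) (G : Y -> X) : Prop :=
  [/\ forall x, V x -> W (F x),
      forall y, W y -> V (G y),
      forall x, V x -> G (F x) = x,
      forall y, W y -> F (G y) = y
    & forall x, V x -> (N x <-> M (F x))].

(* k-linearity of maps between spaces of functions into k-modules *)
Definition comb1 (k : comPzRingType) (X : Type) (M : lmodType k)
    (a : k) (f g : X -> M) : X -> M := fun x => a *: f x + g x.
Definition comb2 (k : comPzRingType) (X Y : Type) (M : lmodType k)
    (a : k) (f g : X -> Y -> M) : X -> Y -> M := fun x y => a *: f x y + g x y.

(* Main.v *)
Require Import Defs.
From HB Require Import structures.
From mathcomp Require Import all_boot all_order all_algebra.
From Stdlib Require Import ClassicalEpsilon FunctionalExtensionality.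
Set Implicit Arguments. Unset Strict Implicit. Unset Printing Implicit Defensive.
Import GRing.Theory.
Local Open Scope ring_scope.

Section Lin.
Variable k : comPzRingType.
Implicit Types M N P : lmodType k.

Lemma linE M N (f : M -> N) : lin f -> forall a x y, f (a *: x + y) = a *: f x + f y.
Proof. by []. Qed.

Lemma lin0 M N (f : M -> N) : lin f -> f 0 = 0.
Proof.
move=> lf; have := lf 1 0 0; rewrite !scale1r !addr0 => E.
by apply: (addrI (f 0)); rewrite addr0 -E.
Qed.

Lemma linD M N (f : M -> N) x y : lin f -> f (x + y) = f x + f y.
Proof. by move=> lf; have := lf 1 x y; rewrite !scale1r. Qed.

Lemma linZ M N (f : M -> N) a x : lin f -> f (a *: x) = a *: f x.
Proof. by move=> lf; have := lf a x 0; rewrite (lin0 lf) !addr0. Qed.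

Lemma linKE M (f : M -> k) : linK f -> forall a x y, f (a *: x + y) = a * f x + f y.
Proof. by []. Qed.
Lemma linK0 M (f : M -> k) : linK f -> f 0 = 0.
Proof.
move=> lf; have := lf 1 0 0; rewrite !scale1r !addr0 mul1r => E.
by apply: (addrI (f 0)); rewrite addr0 -E.
Qed.
Lemma linKD M (f : M -> k) x y : linK f -> f (x + y) = f x + f y.
Proof. by move=> lf; have := lf 1 x y; rewrite !scale1r mul1r. Qed.
Lemma linKZ M (f : M -> k) a x : linK f -> f (a *: x) = a * f x.
Proof. by move=> lf; have := lf a x 0; rewrite (linK0 lf) !addr0. Qed.

Lemma lin_id M : lin (fun x : M => x). Proof. by []. Qed.
Lemma lin_zero M N : lin (fun _ : M => 0 : N).
Proof. by move=> a x y; rewrite scaler0 addr0. Qed.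
Lemma lin_comp M N P (g : N -> P) (f : M -> N) : lin g -> lin f -> lin (fun x => g (f x)).
Proof. by move=> lg lf a x y; rewrite lf lg. Qed.
Lemma lin_add M N (f g : M -> N) : lin f -> lin g -> lin (fun x => f x + g x).
Proof.
move=> lf lg a x y; rewrite lf lg scalerDr.
by rewrite -!addrA; congr (_ + _); rewrite addrCA.
Qed.
Lemma lin_scale M N (c : k) (f : M -> N) : lin f -> lin (fun x => c *: f x).
Proof. by move=> lf a x y; rewrite lf scalerDr !scalerA mulrC. Qed.
Lemma lin_scalar_l M N (e : M -> k) (v : N) : linK e -> lin (fun x => e x *: v).
Proof. by move=> le a x y; rewrite le scalerDl scalerA. Qed.
Lemma linK_comp M N (e : N -> k) (f : M -> N) : linK e -> lin f -> linK (fun x => e (f x)).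
Proof. by move=> le lf a x y; rewrite lf le. Qed.
Lemma linK_mul_r M (e : M -> k) (c : k) : linK e -> linK (fun x => e x * c).
Proof. by move=> le a x y; rewrite le mulrDl mulrA. Qed.
Lemma linK_mul_l M (e : M -> k) (c : k) : linK e -> linK (fun x => c * e x).
Proof. by move=> le a x y; rewrite le mulrDr mulrCA. Qed.

Lemma bilin_l M N P (f : M -> N -> P) n : bilin f -> lin (fun m => f m n).
Proof. by case. Qed.
Lemma bilin_r M N P (f : M -> N -> P) m : bilin f -> lin (f m).
Proof. by case. Qed.

Lemma lin_mull (A : algType k) (b : A) : lin (fun x : A => b * x).
Proof. by move=> a x y; rewrite mulrDr scalerAr. Qed.
Lemma lin_mulr (A : algType k) (b : A) : lin (fun x : A => x * b).
Proof. by move=> a x y; rewrite mulrDl scalerAl. Qed.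

Section Tens.
Variables (M N : lmodType k) (T : tensor M N).

Lemma tmul_l n : lin (fun m => tmul T m n). Proof. by case: (tmul_bilin T). Qed.
Lemma tmul_r m : lin (tmul T m). Proof. by case: (tmul_bilin T). Qed.

Lemma tmulZl a m n : tmul T (a *: m) n = a *: tmul T m n.
Proof. exact: (linZ _ _ (tmul_l n)). Qed.
Lemma tmulZr a m n : tmul T m (a *: n) = a *: tmul T m n.
Proof. exact: (linZ _ _ (tmul_r m)). Qed.
Lemma tmulDl m m' n : tmul T (m + m') n = tmul T m n + tmul T m' n.
Proof. exact: (linD _ _ (tmul_l n)). Qed.
Lemma tmulDr m n n' : tmul T m (n + n') = tmul T m n + tmul T m n'.
Proof. exact: (linD _ _ (tmul_r m)). Qed.

Lemma tlift_spec P (f : M -> N -> P) : bilin f ->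
  lin (tlift T f) /\ forall m n, tlift T f (tmul T m n) = f m n.
Proof.
move=> bf; unfold tlift; apply epsilon_spec.
by case: (tuniv T bf) => g [Hg _]; exists g.
Qed.

Lemma lin_tlift P (f : M -> N -> P) : bilin f -> lin (tlift T f).
Proof. by move=> /tlift_spec []. Qed.

Lemma tliftE P (f : M -> N -> P) m n : bilin f -> tlift T f (tmul T m n) = f m n.
Proof. by move=> /tlift_spec [] _ ->. Qed.

Lemma tensor_ext P (g1 g2 : tT T -> P) : lin g1 -> lin g2 ->
  (forall m n, g1 (tmul T m n) = g2 (tmul T m n)) -> g1 = g2.
Proof.
move=> l1 l2 E.
have bf : bilin (fun m n => g1 (tmul T m n)).
  split=> [m|n]; apply: lin_comp => //; [exact: tmul_r | exact: tmul_l].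
case: (tuniv T bf) => g [_ U].
by rewrite -(U g1 (conj l1 (fun _ _ => erefl))) -(U g2 (conj l2 (fun m n => esym (E m n)))).
Qed.

Lemma tensor_extP P (g1 g2 : tT T -> P) x : lin g1 -> lin g2 ->
  (forall m n, g1 (tmul T m n) = g2 (tmul T m n)) -> g1 x = g2 x.
Proof. by move=> l1 l2 E; rewrite (tensor_ext l1 l2 E). Qed.

Lemma tlift_ext P (f f' : M -> N -> P) : (forall m n, f m n = f' m n) -> tlift T f = tlift T f'.
Proof.
move=> E; have -> // : f = f'.
by apply: functional_extensionality => m; apply: functional_extensionality => n.
Qed.

Lemma tlift_comp (P Q : lmodType k) (g : P -> Q) (f : M -> N -> P) x : lin g -> bilin f ->
  g (tlift T f x) = tlift T (fun m n => g (f m n)) x.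
Proof.
move=> lg bf.
have bgf : bilin (fun m n => g (f m n)).
  by split=> [m|n]; apply: lin_comp => //; [exact: bilin_r | exact: bilin_l].
apply: (tensor_extP (g1 := fun x => g (tlift T f x)) (g2 := tlift T (fun m n => g (f m n)))).
- exact: lin_comp (lin_tlift bf).
- exact: lin_tlift.
by move=> m n; rewrite !tliftE.
Qed.

Lemma lin_tlift_param (X P : lmodType k) (F : X -> M -> N -> P) z :
  (forall p, bilin (F p)) -> (forall m n, lin (fun p => F p m n)) ->
  lin (fun p => tlift T (F p) z).
Proof.
move=> bF lF a p q.
apply: (tensor_extP (g1 := tlift T (F (a *: p + q)))
                    (g2 := fun z => a *: tlift T (F p) z + tlift T (F q) z)).
- exact: lin_tlift.
- by apply: lin_add; [apply: lin_scale|]; apply: lin_tlift.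
by move=> m n; rewrite !tliftE // lF.
Qed.

Lemma tlift_comb P a (f g : M -> N -> P) x : bilin f -> bilin g ->
  tlift T (fun m n => a *: f m n + g m n) x = a *: tlift T f x + tlift T g x.
Proof.
move=> bf bg.
have bfg : bilin (fun m n => a *: f m n + g m n).
  split=> [m|n]; (apply: lin_add; [apply: lin_scale|]);
   by [apply: bilin_r|apply: bilin_l].
apply: (tensor_extP (g2 := fun x => a *: tlift T f x + tlift T g x)).
- exact: lin_tlift.
- by apply: lin_add; [apply: lin_scale|]; apply: lin_tlift.
by move=> m n; rewrite !tliftE.
Qed.

End Tens.

Lemma tlift_swap (M N M' N' P : lmodType k) (T : tensor M N) (T' : tensor M' N')
   (g : M -> N -> M' -> N' -> P) x y :
  (forall m n, bilin (g m n)) -> (forall m' n', bilin (fun m n => g m n m' n')) ->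
  tlift T (fun m n => tlift T' (g m n) y) x = tlift T' (fun m' n' => tlift T (fun m n => g m n m' n') x) y.
Proof.
move=> b1 b2.
have H1 : forall y, bilin (fun m n => tlift T' (g m n) y).
  move=> y0; split=> [m|n].
  - apply: (lin_tlift_param (F := fun n => g m n)) => // m0 n0.
    by case: (b2 m0 n0) => L _; apply: L.
  - apply: (lin_tlift_param (F := fun m => g m n)) => // m0 n0.
    by case: (b2 m0 n0) => _ L; apply: L.
have H2 : bilin (fun m' n' => tlift T (fun m n => g m n m' n') x).
  split=> [m'|n'].
  - apply: (lin_tlift_param (F := fun n' m n => g m n m' n')) => // m n.
    by case: (b1 m n) => L _; apply: L.
  - apply: (lin_tlift_param (F := fun m' m n => g m n m' n')) => // m n.
    by case: (b1 m n) => _ L; apply: L.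
apply: (tensor_extP (T := T') (g1 := fun y => tlift T (fun m n => tlift T' (g m n) y) x)).
- apply: (lin_tlift_param (F := fun y m n => tlift T' (g m n) y)) => // m n.
  exact: lin_tlift.
- exact: lin_tlift.
move=> m' n'; rewrite tliftE //.
f_equal; apply: functional_extensionality => m.
by apply: functional_extensionality => n; rewrite tliftE.
Qed.

Lemma tlift_extP (M N P : lmodType k) (T : tensor M N) (f f' : M -> N -> P) x :
  (forall m n, f m n = f' m n) -> tlift T f x = tlift T f' x.
Proof. by move=> E; rewrite (tlift_ext T E). Qed.

Lemma tensor_ext2 (M N O P : lmodType k) (T' : tensor N O) (T : tensor M (tT T'))
  (g1 g2 : tT T -> P) : lin g1 -> lin g2 ->
  (forall m n o, g1 (tmul T m (tmul T' n o)) = g2 (tmul T m (tmul T' n o))) -> g1 = g2.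
Proof.
move=> l1 l2 E; apply: tensor_ext => // m.
have := @tensor_ext _ _ T' _ (fun x => g1 (tmul T m x)) (fun x => g2 (tmul T m x)).
move=> /(_ (lin_comp l1 (tmul_r T m)) (lin_comp l2 (tmul_r T m)) (E m)) E2 n.
exact: (congr1 (fun g => g n) E2).
Qed.

Lemma tensor_ext2P (M N O P : lmodType k) (T' : tensor N O) (T : tensor M (tT T'))
  (g1 g2 : tT T -> P) x : lin g1 -> lin g2 ->
  (forall m n o, g1 (tmul T m (tmul T' n o)) = g2 (tmul T m (tmul T' n o))) -> g1 x = g2 x.
Proof. by move=> l1 l2 E; rewrite (tensor_ext2 l1 l2 E). Qed.
End Lin.


Section Base.
Variables (k : comPzRingType) (D : doi_hopf k).
Lemma act_l h : lin (fun c => actC c h :> C D). Proof. by case: (actC_bilin D). Qed.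
Lemma act_r c : lin (actC c : H D -> C D). Proof. by case: (actC_bilin D). Qed.
End Base.

Ltac lin_extra := fail.

Ltac lin_tac :=
  try unfold lactHom, ractHom, twistA, twistCA, F45, G54, F12, G21, F23, G32, F34, G43, comb1, comb2;
  cbv beta;
  match goal with
  | |- forall _, _ => intro; lin_tac
  | |- bilin _ => first [assumption | split; intro; lin_tac]
  | |- linK _ => linK_tac
  | |- lin (fun x => x) => exact: lin_id
  | |- lin id => exact: lin_id
  | |- lin (fun _ => 0) => exact: lin_zero
  | |- lin (fun x => @?f x + @?g x) => apply: (lin_add (f:=f) (g:=g)); lin_tac
  | |- lin (fun x => ?c *: @?f x) => apply: (lin_scale c (f:=f)); lin_tac
  | |- lin (fun x => @?e x *: ?v) => apply: (lin_scalar_l (e:=e) v); linK_tac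
  | |- lin (fun x => tlift ?T ?g (@?f x)) =>
      apply: (lin_comp (g:=tlift T g) (f:=f)); [apply: lin_tlift; lin_tac | lin_tac]
  | |- lin (fun x => tlift ?T (@?F x) ?z) =>
      apply: (@lin_tlift_param _ _ _ T _ _ F z); [intro; lin_tac | intros; lin_tac]
  | |- lin (fun x => ?g (@?f x)) => apply: (lin_comp (g:=g) (f:=f)); [lin_base | lin_tac]
  | |- lin (fun x => ?g (@?f x) ?n) =>
      apply: (lin_comp (g:=fun m => g m n) (f:=f)); [lin_base | lin_tac]
  | |- lin (fun x => ?g (@?f x) ?n ?n2) =>
      apply: (lin_comp (g:=fun m => g m n n2) (f:=f)); [lin_base | lin_tac]
  | |- lin ?g => lin_base
  end
with linK_tac :=
  cbv beta;
  match goal with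
  | |- linK (fun x => @?e x * ?c) => apply: (linK_mul_r (e:=e) c); linK_tac
  | |- linK (fun x => ?c * @?e x) => apply: (linK_mul_l (e:=e) c); linK_tac
  | |- linK (fun x => ?e (@?f x)) => apply: (linK_comp (e:=e) (f:=f)); [linK_base | lin_tac]
  | |- linK ?e => linK_base
  end
with linK_base := first [ assumption | exact: epsC_lin | exact: epsH_lin ]
with lin_base :=
  first [ assumption
        | exact: rhoA_lin | exact: DeltaC_lin | exact: DeltaH_lin
        | exact: tmul_l | exact: tmul_r
        | exact: lin_mull | exact: lin_mulr
        | exact: act_l | exact: act_r
        | lin_extra
        | (apply: bilin_l; eassumption) | (apply: bilin_r; eassumption)
        | apply: lin_tlift; lin_tac
        | solve [eauto] ].


Ltac funext2 := apply: functional_extensionality => ?; apply: functional_extensionality => ?.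

Lemma funeqP (X Y : Type) (f g : X -> Y) : f = g -> forall x, f x = g x.
Proof. by move=> ->. Qed.

Ltac tlE := rewrite tliftE; try solve [lin_tac].
Ltac tlC g := rewrite (tlift_comp (g:=g)); try solve [lin_tac].
Ltac ext1 x := move: x; apply: funeqP; apply: tensor_ext; [lin_tac | lin_tac | ].
Ltac ext2 x := move: x; apply: funeqP; apply: tensor_ext2; [lin_tac | lin_tac | ].


Section B.
Variables (k : comPzRingType) (D : doi_hopf k).
Local Notation H := (H D). Local Notation A := (A D). Local Notation C := (C D).
Local Notation HA := (HA D). Local Notation HH := (HH D). Local Notation HHA := (HHA D).
Local Notation CC := (CC D). Local Notation CCC := (CCC D). Local Notation CA := (CA D).
Local Notation CCA := (CCA D). Local Notation CCCA := (CCCA D).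
Local Notation rho := (@rhoA k D). Local Notation Dl := (@DeltaC k D).
Local Notation eC := (@epsC k D). Local Notation eH := (@epsH k D).
Local Notation act := (@actC k D). Local Notation DH := (@DeltaH k D).

Lemma lin_lactCA (a : A) : lin (@lactCA k D a).
Proof. rewrite /lactCA; lin_tac. Qed.
Lemma lin_lactCA_l (x : tT CA) : lin (fun a : A => lactCA a x).
Proof. rewrite /lactCA; lin_tac. Qed.
Lemma lin_ractCA (a : A) : lin (fun x => @ractCA k D x a).
Proof. rewrite /ractCA; lin_tac. Qed.
Lemma lin_ractCA_r (x : tT CA) : lin (@ractCA k D x).
Proof. rewrite /ractCA; lin_tac. Qed.
Lemma lin_rhoCA : lin (@rhoCA k D).
Proof. rewrite /rhoCA; lin_tac. Qed.
Lemma lin_epsI : lin (@epsI k D).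
Proof. rewrite /epsI; lin_tac. Qed.
Lemma lin_Dexp (d : C) : lin (@Dexp k D d).
Proof. rewrite /Dexp; lin_tac. Qed.
Lemma lin_Dexp_l (th : A) : lin (fun d => @Dexp k D d th).
Proof. rewrite /Dexp; lin_tac. Qed.
Lemma lin_ractCCA (a : A) : lin (fun y => @ractCCA k D y a).
Proof. rewrite /ractCCA; lin_tac. Qed.
Lemma lin_rhoCCA : lin (@rhoCCA k D).
Proof. rewrite /rhoCCA; lin_tac. Qed.
End B.

Ltac lin_extra ::= first [ exact: lin_lactCA | exact: lin_lactCA_l | exact: lin_ractCA
  | exact: lin_ractCA_r | exact: lin_rhoCA | exact: lin_epsI | exact: lin_Dexp
  | exact: lin_Dexp_l | exact: lin_ractCCA | exact: lin_rhoCCA ].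



Section B2.
Variables (k : comPzRingType) (D : doi_hopf k).
Local Notation H := (H D). Local Notation A := (A D). Local Notation C := (C D).
Local Notation HA := (HA D). Local Notation HH := (HH D). Local Notation HHA := (HHA D).
Local Notation CC := (CC D). Local Notation CCC := (CCC D). Local Notation CA := (CA D).
Local Notation CCA := (CCA D). Local Notation CCCA := (CCCA D).
Local Notation rho := (@rhoA k D). Local Notation Dl := (@DeltaC k D).
Local Notation eC := (@epsC k D). Local Notation eH := (@epsH k D).
Local Notation act := (@actC k D). Local Notation DH := (@DeltaH k D).

Lemma lactCA_t (a : A) c b : lactCA a (tmul CA c b) = tmul CA c (a * b).
Proof. by rewrite /lactCA; tlE. Qed.
Lemma ractCA_t (a : A) c b : ractCA (tmul CA c b) a =
  tlift HA (fun h a0 => tmul CA (act c h) (b * a0)) (rho a).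
Proof. by rewrite /ractCA; tlE. Qed.
Lemma rhoCA_t c b : rhoCA (tmul CA c b) =
  tlift CC (fun c1 c2 => tmul CCA c1 (tmul CA c2 b)) (Dl c).
Proof. by rewrite /rhoCA; tlE. Qed.
Lemma epsI_t c b : epsI (tmul CA c b) = eC c *: b.
Proof. by rewrite /epsI; tlE. Qed.
Lemma ractCCA_t (a : A) c d b : ractCCA (tmul CCA c (tmul CA d b)) a =
  tlift HA (fun h a' => tlift HA (fun h' a0 =>
         tmul CCA (act c h) (tmul CA (act d h') (b * a0))) (rho a')) (rho a).
Proof. by rewrite /ractCCA; tlE; tlE. Qed.
Lemma rhoCCA_t c x : rhoCCA (tmul CCA c x) =
  tlift CC (fun c1 c2 => tmul CCCA c1 (tmul CCA c2 x)) (Dl c).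
Proof. by rewrite /rhoCCA; tlE. Qed.

Lemma lactCA_mul (a b : A) x : lactCA a (lactCA b x) = lactCA (a * b) x.
Proof. by ext1 x; move=> cc bb; rewrite !lactCA_t mulrA. Qed.
Lemma lactCA_1 (x : tT CA) : lactCA 1 x = x.
Proof. by ext1 x; move=> cc bb; rewrite lactCA_t mul1r. Qed.

Lemma lact_ract (a b : A) x : lactCA b (ractCA x a) = ractCA (lactCA b x) a.
Proof.
ext1 x; move=> cc bb; rewrite ractCA_t lactCA_t ractCA_t; tlC (lactCA b).
by apply: tlift_extP => h a0; rewrite lactCA_t mulrA.
Qed.

Lemma rho_lact (a : A) x : rhoCA (lactCA a x) =
  tlift CCA (fun c z => tmul CCA c (lactCA a z)) (rhoCA x).
Proof.
ext1 x; move=> cc bb; rewrite lactCA_t !rhoCA_t; tlC (tlift CCA (fun c z => tmul CCA c (lactCA a z))).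
by apply: tlift_extP => c1 c2; tlE; rewrite lactCA_t.
Qed.

Lemma epsI_lact (a : A) x : epsI (lactCA a x) = a * epsI x.
Proof. by ext1 x; move=> cc bb; rewrite lactCA_t !epsI_t scalerAr. Qed.

Lemma epsI_ract (a : A) x : epsI (ractCA x a) = epsI x * a.
Proof.
ext1 x; move=> cc bb; rewrite ractCA_t epsI_t; tlC (@epsI k D).
transitivity (eC cc *: (bb * tlift HA (fun h a0 => eH h *: a0) (rho a))).
  tlC (fun z => eC cc *: (bb * z)); apply: tlift_extP => h a0.
  by rewrite epsI_t epsC_act -scalerA -scalerAr.
by rewrite rhoA_counit scalerAl.
Qed.

Lemma epsI_rho x : tlift CCA (fun c z => tmul CA c (epsI z)) (rhoCA x) = x.
Proof.
ext1 x; move=> cc bb; rewrite rhoCA_t; tlC (tlift CCA (fun c z => tmul CA c (epsI z))).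
transitivity (tmul CA (tlift CC (fun c1 c2 => eC c2 *: c1) (Dl cc)) bb).
  tlC (fun z => tmul CA z bb); apply: tlift_extP => c1 c2.
  by tlE; rewrite epsI_t tmulZl tmulZr.
by rewrite (epsC_counitr cc).
Qed.

Lemma rho_coass_sum (P : lmodType k) (F : H -> H -> A -> P) (a : A) :
  (forall g h, lin (F g h)) -> (forall g b, lin (fun h => F g h b)) ->
  (forall h b, lin (fun g => F g h b)) ->
  tlift HA (fun g b => tlift HA (fun h b' => F g h b') (rho b)) (rho a) =
  tlift HA (fun g b' => tlift HH (fun g1 g2 => F g1 g2 b') (DH g)) (rho a).
Proof.
move=> F1 F2 F3.
pose Phi := tlift HHA (fun g z => tlift HA (F g) z).
transitivity (Phi (tlift HA (fun h b => tmul HHA h (rho b)) (rho a))).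
  by tlC Phi; apply: tlift_extP => g b; rewrite /Phi; tlE.
rewrite rhoA_coass; tlC Phi; apply: tlift_extP => g b'; tlC Phi.
by apply: tlift_extP => g1 g2; rewrite /Phi; tlE; tlE.
Qed.

Lemma Dl_coass_sum (P : lmodType k) (F : C -> C -> C -> P) (c : C) :
  (forall x y, lin (F x y)) -> (forall x z, lin (fun y => F x y z)) ->
  (forall y z, lin (fun x => F x y z)) ->
  tlift CC (fun c1 c2 => tlift CC (F c1) (Dl c2)) (Dl c) =
  tlift CC (fun c1 c2 => tlift CC (fun x y => F x y c2) (Dl c1)) (Dl c).
Proof.
move=> F1 F2 F3.
pose Phi := tlift CCC (fun c z => tlift CC (F c) z).
transitivity (Phi (tlift CC (fun c1 c2 => tmul CCC c1 (Dl c2)) (Dl c))).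
  by tlC Phi; apply: tlift_extP => g b; rewrite /Phi; tlE.
rewrite DeltaC_coass; tlC Phi; apply: tlift_extP => g b'; tlC Phi.
by apply: tlift_extP => g1 g2; rewrite /Phi; tlE; tlE.
Qed.
End B2.

Section P1.
Variables (k : comPzRingType) (D : doi_hopf k).
Local Notation H := (H D). Local Notation A := (A D). Local Notation C := (C D).
Local Notation HA := (HA D). Local Notation HH := (HH D). Local Notation HHA := (HHA D).
Local Notation CC := (CC D). Local Notation CCC := (CCC D). Local Notation CA := (CA D).
Local Notation CCA := (CCA D). Local Notation CCCA := (CCCA D).
Local Notation rho := (@rhoA k D). Local Notation Dl := (@DeltaC k D).
Local Notation eC := (@epsC k D). Local Notation eH := (@epsH k D).
Local Notation act := (@actC k D). Local Notation DH := (@DeltaH k D).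

Lemma F12E (nu : tT CCA -> tT CA) c d : lin nu ->
  F12 nu (tmul CC c d) = nu (tmul CCA c (tmul CA d 1)).
Proof. by move=> ln; rewrite /F12; tlE. Qed.

Lemma G21E (la : tT CC -> tT CA) c d a : lin la ->
  G21 la (tmul CCA c (tmul CA d a)) = lactCA a (la (tmul CC c d)).
Proof. by move=> ll; rewrite /G21; tlE; tlE. Qed.

Lemma part1 :
      norm_bij (@V1 k D) (@N1 k D) (@V2 k D) (@N2 k D) (@F12 k D) (@G21 k D)
      /\ (forall (a : k) nu nu', @V1 k D nu -> @V1 k D nu' ->
            @F12 k D (comb1 a nu nu') = comb1 a (@F12 k D nu) (@F12 k D nu')).
Proof.
split.
split.
- move=> nu [n1 n2 n3 n4 n5]; split.
  + lin_tac.
  + move=> c d; rewrite F12E // -n5.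
    by apply: tlift_extP => d1 d2; rewrite F12E.
  + move=> c d a; rewrite F12E // -n2 ractCCA_t /twistCA.
    tlC nu; apply: tlift_extP => h a'; tlC nu; apply: tlift_extP => h' a0.
    by rewrite F12E // -n4 mul1r mulr1.
  + move=> c d; rewrite F12E // n3 rhoCCA_t.
    tlC (tlift CCCA (fun c z => tmul CCA c (nu z))).
    by apply: tlift_extP => c1 c2; tlE; rewrite F12E.
- move=> la [l1 l2 l3 l4].
  have lG : lin (G21 la) by lin_tac.
  split.
  + exact: lG.
  + move=> y a; ext2 y => c d b.
    rewrite G21E // -lact_ract -l3 /twistCA ractCCA_t.
    tlC (G21 la); tlC (lactCA b); apply: tlift_extP => h a'.
    tlC (G21 la); tlC (lactCA b); apply: tlift_extP => h' a0.
    by rewrite G21E // lactCA_mul.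
  + move=> y; ext2 y => c d b.
    rewrite G21E // rho_lact -l4 rhoCCA_t.
    tlC (tlift CCA (fun c z => tmul CCA c (lactCA b z))).
    tlC (tlift CCCA (fun c z => tmul CCA c (G21 la z))).
    by apply: tlift_extP => c1 c2; tlE; tlE; rewrite G21E.
  + by move=> c d a b; rewrite !G21E // lactCA_mul.
  + move=> c d; rewrite G21E // lactCA_1 -l2.
    by apply: tlift_extP => d1 d2; rewrite G21E // lactCA_1.
- move=> nu [n1 n2 n3 n4 n5]; apply: tensor_ext2; try solve [lin_tac].
  move=> c d a; rewrite G21E; last by lin_tac.
  by rewrite F12E // -n4 mulr1.
- move=> la [l1 l2 l3 l4]; apply: tensor_ext; try solve [lin_tac].
  move=> c d; rewrite F12E; last by lin_tac.
  by rewrite G21E // lactCA_1.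
- move=> nu [n1 n2 n3 n4 n5]; rewrite /N1 /N2; split.
  + move=> N c; rewrite -(N c 1).
    by apply: tlift_extP => c1 c2; rewrite F12E.
  + move=> N c a.
    transitivity (lactCA a (tlift CC (fun c1 c2 => F12 nu (tmul CC c1 c2)) (Dl c))).
      tlC (lactCA a); apply: tlift_extP => c1 c2.
      by rewrite F12E // -n4 mulr1.
    by rewrite N lactCA_t mulr1.
- move=> a nu nu' [l _ _ _ _] [l' _ _ _ _]; apply: tensor_ext; try solve [lin_tac].
  move=> c d; rewrite F12E; last by lin_tac.
  by rewrite /comb1 !F12E.
Qed.
End P1.

Section P2.
Variables (k : comPzRingType) (D : doi_hopf k).
Local Notation H := (H D). Local Notation A := (A D). Local Notation C := (C D).
Local Notation HA := (HA D). Local Notation HH := (HH D). Local Notation HHA := (HHA D).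
Local Notation CC := (CC D). Local Notation CCC := (CCC D). Local Notation CA := (CA D).
Local Notation CCA := (CCA D). Local Notation CCCA := (CCCA D).
Local Notation rho := (@rhoA k D). Local Notation Dl := (@DeltaC k D).
Local Notation eC := (@epsC k D). Local Notation eH := (@epsH k D).
Local Notation act := (@actC k D). Local Notation DH := (@DeltaH k D).

Lemma G32E (th : tT CC -> A) c d : lin th ->
  G32 th (tmul CC c d) = tlift CC (fun c1 c2 => tmul CA c1 (th (tmul CC c2 d))) (Dl c).
Proof. by move=> lt; rewrite /G32; tlE. Qed.

Lemma E23 (th : tT CC -> A) c d : lin th ->
  epsI (tlift CC (fun c1 c2 => tmul CA c1 (th (tmul CC c2 d))) (Dl c)) = th (tmul CC c d).
Proof.
move=> lt; tlC (@epsI k D).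
transitivity (th (tmul CC (tlift CC (fun c1 c2 => eC c1 *: c2) (Dl c)) d)).
  tlC (fun z => th (tmul CC z d)); apply: tlift_extP => c1 c2.
  by rewrite epsI_t tmulZl (linZ _ _ lt).
by rewrite (epsC_counitl c).
Qed.

Lemma P2a (la : tT CC -> tT CA) c d : @V2 k D la ->
  la (tmul CC c d) = tlift CC (fun c1 c2 => tmul CA c1 (epsI (la (tmul CC c2 d)))) (Dl c).
Proof.
move=> [l1 l2 l3 l4]; rewrite -{1}(epsI_rho (la (tmul CC c d))) -l4.
by tlC (tlift CCA (fun c z => tmul CA c (epsI z))); apply: tlift_extP => c1 c2; tlE.
Qed.

Lemma GF23 (la : tT CC -> tT CA) : @V2 k D la -> G32 (F23 la) = la.
Proof.
move=> Hla; have [l1 _ _ _] := Hla; apply: tensor_ext; try solve [lin_tac].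
by move=> c d; rewrite G32E; [rewrite (P2a c d Hla) | lin_tac].
Qed.

Lemma part2 :
      norm_bij (@V2 k D) (@N2 k D) (@V3 k D) (@N3 k D) (@F23 k D) (@G32 k D)
      /\ (forall (a : k) la la', @V2 k D la -> @V2 k D la' ->
            @F23 k D (comb1 a la la') = comb1 a (@F23 k D la) (@F23 k D la')).
Proof.
split; last first.
  move=> a la la' _ _; apply: functional_extensionality => x.
  by rewrite /F23 /comb1 lin_epsI.
split.
- move=> la Hla; have [l1 l2 l3 l4] := Hla; rewrite /F23; split.
  + lin_tac.
  + move=> c d a; rewrite -epsI_ract -l3 /twistCA /twistA.
    tlC (@epsI k D); apply: tlift_extP => h a'; tlC (@epsI k D).
    by apply: tlift_extP => h' a0; rewrite epsI_lact.
  + by move=> c d; rewrite -(P2a c d Hla) l2.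
- move=> th [t1 t2 t3]; have lG : lin (G32 th) by lin_tac.
  split.
  + exact: lG.
  + move=> c d; rewrite G32E // t3.
    by apply: tlift_extP => d1 d2; rewrite G32E // E23.
  + move=> c d a.
    transitivity (tlift HA (fun h a' => tlift HA (fun h' a0 =>
       tlift CC (fun c1 c2 => tlift HH (fun h1 h2 =>
         tmul CA (act c1 h1) (a0 * th (tmul CC (act c2 h2) (act d h')))) (DH h)) (Dl c))
       (rho a')) (rho a)).
      rewrite /twistCA; apply: tlift_extP => h a'; apply: tlift_extP => h' a0.
      rewrite G32E // DeltaC_act.
      tlC (tlift CC (fun x1 x2 => tmul CA x1 (th (tmul CC x2 (act d h'))))).
      tlC (lactCA a0); apply: tlift_extP => c1 c2.
      tlC (tlift CC (fun x1 x2 => tmul CA x1 (th (tmul CC x2 (act d h'))))).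
      tlC (lactCA a0); apply: tlift_extP => h1 h2.
      by tlE; rewrite lactCA_t.
    transitivity (tlift HA (fun h a' => tlift CC (fun c1 c2 => tlift HA (fun h' a0 =>
       tlift HH (fun h1 h2 =>
         tmul CA (act c1 h1) (a0 * th (tmul CC (act c2 h2) (act d h')))) (DH h))
       (rho a')) (Dl c)) (rho a)).
      by apply: tlift_extP => h a'; apply: tlift_swap; lin_tac.
    transitivity (tlift CC (fun c1 c2 => tlift HA (fun h a' => tlift HA (fun h' a0 =>
       tlift HH (fun h1 h2 =>
         tmul CA (act c1 h1) (a0 * th (tmul CC (act c2 h2) (act d h')))) (DH h))
       (rho a')) (rho a)) (Dl c)).
      by apply: tlift_swap; lin_tac.
    transitivity (tlift CC (fun c1 c2 => tlift HA (fun h a' => tlift HH (fun h1 h2 =>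
       tlift HA (fun h' a0 =>
         tmul CA (act c1 h1) (a0 * th (tmul CC (act c2 h2) (act d h')))) (rho a'))
       (DH h)) (rho a)) (Dl c)).
      apply: tlift_extP => c1 c2; apply: tlift_extP => h a'.
      by apply: tlift_swap; lin_tac.
    symmetry; rewrite G32E //; tlC (fun x => ractCA x a).
    apply: tlift_extP => c1 c2; rewrite ractCA_t.
    transitivity (tlift HA (fun g b => tlift HA (fun h b' => tlift HA (fun h' a0 =>
         tmul CA (act c1 g) (a0 * th (tmul CC (act c2 h) (act d h')))) (rho b'))
       (rho b)) (rho a)).
      apply: tlift_extP => g b; rewrite t2 /twistA.
      tlC (tmul CA (act c1 g)); apply: tlift_extP => h b'.
      by tlC (tmul CA (act c1 g)).
    apply: (rho_coass_sum (F := fun g h b' => tlift HA (fun h' a0 =>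
         tmul CA (act c1 g) (a0 * th (tmul CC (act c2 h) (act d h')))) (rho b'))); lin_tac.
  + move=> c d.
    transitivity (tlift CC (fun c1 c2 => tlift CC (fun x y =>
       tmul CCA c1 (tmul CA x (th (tmul CC y d)))) (Dl c2)) (Dl c)).
      by apply: tlift_extP => c1 c2; rewrite G32E //; tlC (tmul CCA c1).
    etransitivity; first apply: (Dl_coass_sum (F := fun c1 x y =>
       tmul CCA c1 (tmul CA x (th (tmul CC y d))))); try solve [lin_tac].
    rewrite G32E //; tlC (@rhoCA k D).
    by apply: tlift_extP => c1 c2; rewrite rhoCA_t.
- by move=> la Hla; apply: GF23.
- move=> th [t1 t2 t3]; apply: tensor_ext; try solve [lin_tac].
  by move=> c d; rewrite /F23 G32E // E23.
- move=> la Hla; have [l1 l2 l3 l4] := Hla; rewrite /N2 /N3; split.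
  + move=> N c; rewrite /F23.
    transitivity (epsI (tlift CC (fun c1 c2 => la (tmul CC c1 c2)) (Dl c))).
      by tlC (@epsI k D).
    by rewrite N epsI_t.
  + move=> N c; rewrite -(GF23 Hla).
    transitivity (tlift CC (fun c1 c2 => tlift CC (fun x y =>
       tmul CA x (F23 la (tmul CC y c2))) (Dl c1)) (Dl c)).
      by apply: tlift_extP => c1 c2; rewrite G32E //; lin_tac.
    rewrite -(Dl_coass_sum (F := fun x y z => tmul CA x (F23 la (tmul CC y z)))); try solve [lin_tac].
    transitivity (tlift CC (fun c1 c2 => tmul CA c1
        (tlift CC (fun x y => F23 la (tmul CC x y)) (Dl c2))) (Dl c)).
      by apply: tlift_extP => c1 c2; tlC (tmul CA c1).
    transitivity (tmul CA (tlift CC (fun c1 c2 => eC c2 *: c1) (Dl c)) 1).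
      tlC (fun z => tmul CA z (1 : A)).
      by apply: tlift_extP => c1 c2; rewrite N tmulZl tmulZr.
    by rewrite (epsC_counitr c).
Qed.
End P2.

Section P3.
Variables (k : comPzRingType) (D : doi_hopf k).
Local Notation H := (H D). Local Notation A := (A D). Local Notation C := (C D).
Local Notation HA := (HA D). Local Notation HH := (HH D). Local Notation HHA := (HHA D).
Local Notation CC := (CC D). Local Notation CCC := (CCC D). Local Notation CA := (CA D).
Local Notation CCA := (CCA D). Local Notation CCCA := (CCCA D).
Local Notation rho := (@rhoA k D). Local Notation Dl := (@DeltaC k D).
Local Notation eC := (@epsC k D). Local Notation eH := (@epsH k D).
Local Notation act := (@actC k D). Local Notation DH := (@DeltaH k D).

Lemma part3 :
      norm_bij (@V3 k D) (@N3 k D) (@V4 k D) (@N4 k D) (@F34 k D) (@G43 k D)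
      /\ (forall (a : k) th th', @V3 k D th -> @V3 k D th' ->
            @F34 k D (comb1 a th th') = comb2 a (@F34 k D th) (@F34 k D th')).
Proof.
split; last by [].
have bga : forall ga : C -> C -> A, @V4 k D ga -> bilin ga.
  move=> ga [g1 g2 _ _]; split=> [c|d]; first exact: g1.
  move=> a c c'; exact: g2.
split.
- move=> th [lth c2 c3]; rewrite /F34; split.
  + move=> c; lin_tac.
  + by move=> a c c' d; apply: (lin_comp lth (tmul_l _ d)).
  + by move=> c d a; rewrite c2.
  + exact: c3.
- move=> ga Hga; have bg := bga ga Hga; case: Hga => [g1 g2 g3 g4]; rewrite /G43; split.
  + exact: lin_tlift.
  + move=> c d a; tlE; apply: eq_trans (esym (g3 c d a)) _.
    rewrite /twistA; congr tlift; funext2; congr tlift; funext2.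
    by tlE.
  + move=> c d.
    have -> : (fun c1 c2 => tmul CA c1 (tlift CC ga (tmul CC c2 d))) =
              (fun c1 c2 => tmul CA c1 (ga c2 d)) by funext2; tlE.
    by rewrite g4; congr tlift; funext2; tlE.
- move=> th [lth _ _]; rewrite /G43 /F34; apply: tensor_ext => //.
  + lin_tac.
  + by move=> m n; tlE.
- move=> ga Hga; have bg := bga ga Hga; rewrite /G43 /F34; funext2; by tlE.
- by move=> th _; rewrite /N3 /N4 /F34.
Qed.
End P3.

Section P4.
Variables (k : comPzRingType) (D : doi_hopf k).
Local Notation H := (H D). Local Notation A := (A D). Local Notation C := (C D).
Local Notation HA := (HA D). Local Notation HH := (HH D). Local Notation HHA := (HHA D).
Local Notation CC := (CC D). Local Notation CCC := (CCC D). Local Notation CA := (CA D).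
Local Notation CCA := (CCA D). Local Notation CCCA := (CCCA D).
Local Notation rho := (@rhoA k D). Local Notation Dl := (@DeltaC k D).
Local Notation eC := (@epsC k D). Local Notation eH := (@epsH k D).
Local Notation act := (@actC k D). Local Notation DH := (@DeltaH k D).

Lemma lactHom_mul (b a : A) (f : C -> A) d : lin f ->
  lactHom (b * a) f d = tlift HA (fun g b0 => tlift HA (fun g' a0 =>
      (b0 * a0) * f (act (act d g) g')) (rho a)) (rho b).
Proof.
move=> lf; rewrite /lactHom rhoA_mul; tlC (tlift HA (fun h a0 => a0 * f (act d h))).
apply: tlift_extP => g b0; tlC (tlift HA (fun h a0 => a0 * f (act d h))).
by apply: tlift_extP => g' a0; tlE; rewrite actC_mul.
Qed.

Lemma lactHom_1 (f : C -> A) d : lin f -> lactHom 1 f d = f d.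
Proof. by move=> lf; rewrite /lactHom rhoA_one; tlE; rewrite (actC_one d) mul1r. Qed.

Lemma lactHom_comp (b a : A) (f : C -> A) d : lin f ->
  lactHom b (lactHom a f) d = lactHom (b * a) f d.
Proof.
move=> lf; rewrite lactHom_mul // {1}/lactHom; apply: tlift_extP => g b0.
rewrite /lactHom; tlC (fun z => b0 * z); apply: tlift_extP => g' a0.
by rewrite mulrA.
Qed.

Lemma F45E (ga : C -> C -> A) c a d : bilin ga -> F45 ga (tmul CA c a) d = lactHom a (ga c) d.
Proof. by move=> bg; rewrite /F45; tlE. Qed.

Lemma part4 :
      norm_bij (@V4 k D) (@N4 k D) (@V5 k D) (@N5 k D) (@F45 k D) (@G54 k D)
      /\ (forall (a : k) ga ga', @V4 k D ga -> @V4 k D ga' ->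
            @F45 k D (comb2 a ga ga') = comb2 a (@F45 k D ga) (@F45 k D ga')).
Proof.
have bga : forall ga : C -> C -> A, @V4 k D ga -> bilin ga.
  move=> ga [g1 g2 _ _]; split=> [c|d]; first exact: g1.
  move=> a c c'; exact: g2.
have ps1 : forall ga c d, @V4 k D ga -> F45 ga (tmul CA c 1) d = ga c d.
  by move=> ga c d /bga bg; rewrite F45E // lactHom_1 //; lin_tac.
split; last first.
  move=> a ga ga' /bga bg /bga bg'; funext2; rewrite /comb2 /F45.
  rewrite -tlift_comb; try solve [lin_tac].
  apply: tlift_extP => c b; rewrite /lactHom -tlift_comb; try solve [lin_tac].
  by apply: tlift_extP => h a0; rewrite mulrDr scalerAr.
split.
- move=> ga Hga; have bg := bga ga Hga; have Hga' := Hga; case: Hga' => [g1 g2 g3 g4].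
  have lF : forall d, lin (fun x => F45 ga x d) by move=> d; lin_tac.
  split.
  + move=> x; lin_tac.
  + by move=> a x x' d; apply: lF.
  + move=> a x; apply: functional_extensionality => d; ext1 x => c b.
    rewrite lactCA_t !F45E //.
    have -> : F45 ga (tmul CA c b) = lactHom b (ga c).
      by apply: functional_extensionality => e; rewrite F45E.
    by rewrite lactHom_comp.
  + move=> x a; apply: functional_extensionality => d; ext1 x => c b.
    rewrite /ractHom F45E // ractCA_t; tlC (fun x => F45 ga x d).
    transitivity (tlift HA (fun h a' => tlift HA (fun g b0 => tlift HA (fun g' a0 =>
      (b0 * a0) * ga (act c h) (act (act d g) g')) (rho a')) (rho b)) (rho a)).
      by apply: tlift_extP => h a0; rewrite F45E // lactHom_mul.
    rewrite tlift_swap; try solve [lin_tac].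
    transitivity (tlift HA (fun g b0 => b0 * (ga c (act d g) * a)) (rho b)).
      apply: tlift_extP => g b0; rewrite -g3 /twistA; tlC (fun z => b0 * z).
      apply: tlift_extP => h a'; tlC (fun z => b0 * z).
      by apply: tlift_extP => g' a0; rewrite mulrA.
    rewrite /lactHom; tlC (fun z => z * a).
    by apply: tlift_extP => g b0; rewrite mulrA.
  + move=> c d.
    transitivity (tlift CC (fun c1 c2 => tmul CA c1 (ga c2 d)) (Dl c)).
      by apply: tlift_extP => c1 c2; rewrite ps1.
    by rewrite g4; apply: tlift_extP => d1 d2; rewrite ps1.
- move=> ps [p1 p2 p3 p4 p5].
  have lps : forall d, lin (fun x => ps x d) by move=> d a x y; apply: p2.
  rewrite /G54; split.
  + by move=> c; apply: p1.
  + by move=> a c c' d; rewrite tmulDl tmulZl p2.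
  + move=> c d a.
    have -> : ps (tmul CA c 1) d * a = ps (ractCA (tmul CA c 1) a) d by rewrite p4.
    rewrite ractCA_t; tlC (fun x => ps x d); rewrite /twistA.
    apply: tlift_extP => h a0; rewrite mul1r.
    have -> : tmul CA (act c h) a0 = lactCA a0 (tmul CA (act c h) 1) by rewrite lactCA_t mulr1.
    by rewrite p3.
  + exact: p5.
- by move=> ga Hga; rewrite /G54; funext2; rewrite ps1.
- move=> ps [p1 p2 p3 p4 p5].
  have lps : forall d, lin (fun x => ps x d) by move=> d a x y; apply: p2.
  apply: functional_extensionality => x; apply: functional_extensionality => d.
  ext1 x => c a; rewrite /F45 /G54; tlE.
  by rewrite -p3 lactCA_t mulr1.
- move=> ga Hga; rewrite /N4 /N5.
  have -> : (fun c1 c2 => F45 ga (tmul CA c1 1) c2) = (fun c1 c2 => ga c1 c2) by funext2; rewrite ps1.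
  by [].
Qed.
End P4.

Theorem proposition2p1p4 (k : comPzRingType) (D : doi_hopf k) :
  [/\ (* V_1 ~ V_2 :  nu |-> (c (x) d |-> nu (c (x) d (x) 1)) *)
      norm_bij (@V1 k D) (@N1 k D) (@V2 k D) (@N2 k D) (@F12 k D) (@G21 k D)
      /\ (forall (a : k) nu nu', @V1 k D nu -> @V1 k D nu' ->
            @F12 k D (comb1 a nu nu') = comb1 a (@F12 k D nu) (@F12 k D nu')),
      (* V_2 ~ V_3 :  lambda |-> (eps_C (x) I) o lambda *)
      norm_bij (@V2 k D) (@N2 k D) (@V3 k D) (@N3 k D) (@F23 k D) (@G32 k D)
      /\ (forall (a : k) la la', @V2 k D la -> @V2 k D la' ->
            @F23 k D (comb1 a la la') = comb1 a (@F23 k D la) (@F23 k D la')),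
      (* V_3 ~ V_4 :  theta |-> (c |-> d |-> theta (c (x) d)) *)
      norm_bij (@V3 k D) (@N3 k D) (@V4 k D) (@N4 k D) (@F34 k D) (@G43 k D)
      /\ (forall (a : k) th th', @V3 k D th -> @V3 k D th' ->
            @F34 k D (comb1 a th th') = comb2 a (@F34 k D th) (@F34 k D th'))
    & (* V_4 ~ V_5 :  gamma |-> (c (x) a |-> a . gamma(c)) *)
      norm_bij (@V4 k D) (@N4 k D) (@V5 k D) (@N5 k D) (@F45 k D) (@G54 k D)
      /\ (forall (a : k) ga ga', @V4 k D ga -> @V4 k D ga' ->
            @F45 k D (comb2 a ga ga') = comb2 a (@F45 k D ga) (@F45 k D ga'))].
Proof.
split; [exact: part1 | exact: part2 | exact: part3 | exact: part4].
Qed.
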